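(* Let $0<p\le1$ and let $\rho$ be a function quasi-norm over a $\sigma$-finite measure space $(\Omega,\Sigma,\mu)$ which is $p$-convex and has the weak Fatou property. Then $\rho$ has the Riesz–Fischer $p$-property.
   Context: $L_0^+(\mu)$: measurable functions $\Omega\to[0,\infty]$ modulo a.e. equality. A function quasi-norm is $\rho\colon L_0^+(\mu)\to[0,\infty]$ with (F1) $\rho(tf)=t\rho(f)$, $t\ge0$; (F2) $f\le g$ a.e. $\Rightarrow\rho(f)\le\rho(g)$; (F3) $\rho(\chi_E)<\infty$ if $\mu(E)<\infty$; (F4) for all $E$ with $\mu(E)<\infty$ and $\varepsilon>0$ there is $\delta>0$ with $\mu(A)\le\varepsilon$ whenever $A\subseteq E$ measurable and $\rho(\chi_A)\le\delta$; (F5) $\rho(f+g)\le\kappa(\rho(f)+\rho(g))$. $\rho$ is $p$-convex if there is $C$ with $\rho^p(\sum_{j=1}^nf_j)\le C\sum_{j=1}^n\rho^p(f_j)$ for all $n$ and $f_j\in L_0^+(\mu)$. Weak Fatou property: $\rho(\lim f_n)<\infty$ whenever $(f_n)$ is non-decreasing with $\lim\rho(f_n)<\infty$. Riesz–Fischer $p$-property: for every sequence $(f_n)$ in $L_0^+(\mu)$ with $\sum_n\rho^p(f_n)<\infty$ one has $\rho(\sum_nf_n)<\infty$. *)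

(* Defs.v *)
From HB Require Import structures.
From mathcomp Require Import all_boot all_order all_algebra.
From mathcomp Require Import all_classical all_reals all_analysis measurable_realfun.
Set Implicit Arguments. Unset Strict Implicit. Unset Printing Implicit Defensive.
Import Order.TTheory GRing.Theory Num.Theory.
Local Open Scope classical_set_scope.
Local Open Scope ring_scope.
Local Open Scope ereal_scope.

Section FQN.
Context {d : measure_display} {T : measurableType d} {R : realType}.
Variable mu : {measure set T -> \bar R}.

(* Elements of L_0^+(mu): measurable functions T -> [0, +oo].
   Functionals rho are defined on all T -> \bar R; all axioms only concern L_0^+.
   Identification modulo a.e. equality is enforced by (F2), stated with a.e. order. *)
Definition L0p (f : T -> \bar R) : Prop :=
  measurable_fun [set: T] f /\ (forall x, 0 <= f x).

Definition chi (A : set T) : T -> \bar R := fun x => (\1_A x)%:E.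

Definition function_quasi_norm (rho : (T -> \bar R) -> \bar R) : Prop :=
  (forall f, L0p f -> 0 <= rho f) /\
  (forall (t : R) f, (0 <= t)%R -> L0p f ->
      rho (fun x => t%:E * f x) = t%:E * rho f) /\
  (forall f g, L0p f -> L0p g -> {ae mu, forall x, f x <= g x} -> rho f <= rho g) /\
  (forall E, measurable E -> mu E < +oo -> rho (chi E) < +oo) /\
  (forall E, measurable E -> mu E < +oo -> forall eps : R, (0 < eps)%R ->
     exists2 delta : R, (0 < delta)%R &
       forall A, measurable A -> A `<=` E -> rho (chi A) <= delta%:E -> mu A <= eps%:E) /\
  (exists kappa : R, forall f g, L0p f -> L0p g ->
      rho (fun x => f x + g x) <= kappa%:E * (rho f + rho g)).

Definition p_convex (p : R) (rho : (T -> \bar R) -> \bar R) : Prop :=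
  exists C : R, forall (n : nat) (f : nat -> T -> \bar R),
    (forall j, L0p (f j)) ->
    poweR (rho (fun x => \sum_(j < n) f j x)) p <= C%:E * \sum_(j < n) poweR (rho (f j)) p.

Definition weak_Fatou (rho : (T -> \bar R) -> \bar R) : Prop :=
  forall f : nat -> T -> \bar R,
    (forall n, L0p (f n)) -> (forall n x, f n x <= f n.+1 x) ->
    limn (fun n => rho (f n)) < +oo ->
    rho (fun x => limn (fun n => f n x)) < +oo.

Definition Riesz_Fischer_p (p : R) (rho : (T -> \bar R) -> \bar R) : Prop :=
  forall f : nat -> T -> \bar R,
    (forall n, L0p (f n)) ->
    \sum_(n <oo) poweR (rho (f n)) p < +oo ->
    rho (fun x => \sum_(n <oo) f n x) < +oo.

End FQN.

(* Main.v *)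
Require Import Defs.
From HB Require Import structures.
From mathcomp Require Import all_boot all_order all_algebra.
From mathcomp Require Import all_classical all_reals all_analysis measurable_realfun.
Import Order.TTheory GRing.Theory Num.Theory.
Local Open Scope classical_set_scope.
Local Open Scope ring_scope.

Theorem lemma3p18 (d : measure_display) (T : measurableType d) (R : realType)
  (mu : {measure set T -> \bar R}) (p : R) (rho : (T -> \bar R) -> \bar R) :
  sigma_finite setT mu ->
  0 < p <= 1 ->
  function_quasi_norm mu rho ->
  p_convex p rho ->
  weak_Fatou rho ->
  Riesz_Fischer_p p rho.
Proof.
move=> _ /andP[p0 _] [rho0 [_ [rhomono _]]] [C HC] wF f Lf Sfin.
set F := fun n (x : T) => (\sum_(j < n) f j x)%E.
have LF : forall n, L0p (F n).
  move=> n; split.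
    by apply: emeasurable_sum => j; case: (Lf j).
  by move=> x; apply: sume_ge0 => j _; case: (Lf j) => _ ->.
set S := (\sum_(n <oo) poweR (rho (f n)) p)%E.
have S0 : (0 <= S)%E by apply: nneseries_ge0 => *; exact: poweR_ge0.
have [s Ss] : exists s : R, S = s%:E.
  by exists (fine S); rewrite fineK // ge0_fin_numE.
set B := (`|C| * s).
have HB : forall n, (poweR (rho (F n)) p <= B%:E)%E.
  move=> n; apply: (le_trans (HC n f Lf)).
  apply: (le_trans (lee_abs _)); rewrite abseM /B EFinM.
  apply: lee_pmul => //.
  rewrite gee0_abs; last by apply: sume_ge0 => j _; exact: poweR_ge0.
  rewrite -Ss /S; rewrite -(big_mkord xpredT (fun j => poweR (rho (f j)) p)).
  by apply: nneseries_lim_ge => j _ _; exact: poweR_ge0.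
have HB' : forall n, (rho (F n) <= (B `^ p^-1)%:E)%E.
  move=> n; have := HB n; have := rho0 _ (LF n).
  case: (rho (F n)) => [r| |] //=.
    rewrite lee_fin => r0; rewrite lee_fin => rB.
    rewrite -(powRr1 r0) -(mulfV (lt0r_neq0 p0)) powRrM.
    rewrite lee_fin; apply: ge0_ler_powR => //; rewrite ?invr_ge0 ?ltW // nnegrE ?powR_ge0 //.
    by apply: le_trans rB; exact: powR_ge0.
  by rewrite (negbTE (lt0r_neq0 p0)).
have Fmono : forall n x, (F n x <= F n.+1 x)%E.
  move=> n x; rewrite /F big_ord_recr /=; apply: leeDl; by case: (Lf n) => _ ->.
have := wF F LF Fmono.
have -> : (fun x => limn (fun n => F n x)) = (fun x => \sum_(n <oo) f n x)%E.
  apply: funext => x; congr (limn _); apply: funext => n.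
  by rewrite /F -(big_mkord xpredT (fun j => f j x)).
apply; apply: (le_lt_trans (y := (B `^ p^-1)%:E)); last exact: ltry.
apply: lime_le.
  apply: ereal_nondecreasing_is_cvgn => m n mn.
  apply: rhomono; [exact: LF|exact: LF|].
  apply: aeW => x; rewrite /F -!(big_mkord xpredT (fun j => f j x)).
  by apply: lee_sum_nneg_natr => // j _ _; case: (Lf j) => _ ->.
by apply: filterE => n; exact: HB'.
Qed.
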